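(* Let $E$ be a Hausdorff locally convex topological vector space, $\Omega$ an open subset of $E$, and $(Y,\|\cdot\|)$ a normed space. Let $g:\Omega\to Y$ be Gateaux differentiable and continuous at $\hat{x}\in\Omega$. Let $C$ be a family of functions from $Y$ into $\mathbb{R}$ which is $r$-equi-Lipschitz at $g(\hat{x})$ for some $r\ge0$ and equi-Gateaux differentiable at $g(\hat{x})$. Then (i) $\overline{\operatorname{conv}}^{w^*}\{d_G\phi(g(\hat{x})):\phi\in C\}$ is a $w^*$-compact subset of $Y^*$; (ii) the family $\{\phi\circ g:\phi\in C\}$ is equi-Gateaux differentiable at $\hat{x}$ and $d_G(\phi\circ g)(\hat{x})=d_G\phi(g(\hat{x}))\circ d_G g(\hat{x})$ for all $\phi\in C$.
   Context: A map $g$ into a normed space is Gateaux differentiable at $x$ if there is a continuous linear map $d_Gg(x)$ with $\lim_{t\searrow 0}\|(g(x+tv)-g(x)-t\,d_Gg(x)(v))/t\|=0$ for every $v$. A family $C$ of real functions is equi-Gateaux differentiable at $y$ if each $\phi\in C$ is Gateaux differentiable at $y$ and for every direction $v$, $\lim_{t\searrow0}\sup_{\phi\in C}|(\phi(y+tv)-\phi(y)-t\langle d_G\phi(y),v\rangle)/t|=0$. $C$ is $r$-equi-Lipschitz at $y$ if there is a ball centered at $y$ on which every $\phi\in C$ is $r$-Lipschitz. $\overline{\operatorname{conv}}^{w^*}$ denotes weak-star closed convex hull in $Y^*$. *)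

(* Defs.v *)
From HB Require Import structures.
From mathcomp Require Import all_boot all_order all_algebra.
From mathcomp Require Import all_classical all_reals all_analysis.
Set Implicit Arguments. Unset Strict Implicit. Unset Printing Implicit Defensive.
Import Order.TTheory GRing.Theory Num.Theory.
Import numFieldNormedType.Exports.
Local Open Scope classical_set_scope.
Local Open Scope ring_scope.

Definition cont_linear (R : realType) (X Z : tvsType R) (L : X -> Z) : Prop :=
  linear L /\ continuous L.

Definition is_gateaux_deriv (R : realType) (X : tvsType R) (Z : normedModType R)
  (g : X -> Z) (x : X) (L : X -> Z) : Prop :=
  cont_linear L /\
  forall v : X,
    (fun t : R => `| t^-1 *: (g (x + t *: v) - g x - t *: L v) |) @ 0^'+ --> 0.

Definition equi_gateaux (R : realType) (X : tvsType R) (I : Type) (P : set I)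
  (F : I -> X -> R^o) (x : X) (D : I -> X -> R^o) : Prop :=
  (forall i, P i -> is_gateaux_deriv (F i) x (D i)) /\
  forall v : X, forall e : R, 0 < e ->
    \forall t \near 0^'+, forall i, P i ->
      `| (F i (x + t *: v) - F i x - t * D i v) / t | <= e.

Definition equi_lipschitz (R : realType) (Y : normedModType R)
  (C : set (Y -> R^o)) (r : R) (y : Y) : Prop :=
  exists2 d : R, 0 < d &
    forall phi, C phi -> forall a b, ball y d a -> ball y d b ->
      `| phi a - phi b | <= r * `| a - b |.

(* The topological topdual Y^*, as a subset of the function space Y -> R, which
   carries the topology of pointwise convergence; the weak-star topology on
   Y^* is the subspace topology induced by {ptws Y -> R}. *)
Definition topdual (R : realType) (Y : normedModType R) : set {ptws Y -> R^o} :=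
  [set f | cont_linear (f : Y -> R^o)].
Arguments topdual {R} Y.

Definition convex_fun_set (R : realType) (Y : normedModType R)
  (A : set {ptws Y -> R^o}) : Prop :=
  forall f g, A f -> A g -> forall t : R, 0 <= t <= 1 ->
    A (fun y => t * f y + (1 - t) * g y).

(* A is weak-star closed in Y^* (relatively closed in the subspace topology) *)
Definition wstar_closed (R : realType) (Y : normedModType R)
  (A : set {ptws Y -> R^o}) : Prop :=
  A `<=` topdual Y /\ topdual Y `&` closure A `<=` A.

Definition wstar_clconv (R : realType) (Y : normedModType R)
  (S : set {ptws Y -> R^o}) : set {ptws Y -> R^o} :=
  \bigcap_(A in [set A | S `<=` A /\ convex_fun_set A /\ wstar_closed A]) A.

(* Main.v *)
Require Import Defs.
From HB Require Import structures.
From mathcomp Require Import all_boot all_order all_algebra.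
From mathcomp Require Import all_classical all_reals all_analysis.
From mathcomp Require Import lra.
Import Order.TTheory GRing.Theory Num.Theory.
Import numFieldNormedType.Exports.
Local Open Scope classical_set_scope.
Local Open Scope ring_scope.

Lemma comp_uniform (R : realType) (E : tvsType R) (Y : normedModType R)
  (g : E -> Y) (xhat : E) (Dg : E -> Y)
  (C : set (Y -> R^o)) (Dphi : (Y -> R^o) -> (Y -> R^o)) (r : R) :
  is_gateaux_deriv g xhat Dg -> 0 <= r ->
  equi_lipschitz C r (g xhat) ->
  equi_gateaux C id (g xhat) Dphi ->
  forall v : E, forall e : R, 0 < e ->
    \forall t \near 0^'+, forall phi, C phi ->
      `| (phi (g (xhat + t *: v)) - phi (g xhat) - t * Dphi phi (Dg v)) / t | <= e.
Proof.
move=> [_ Hg] r0 [d d0 Lip] [_ HC] v e e0.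
set u0 := Dg v; set y0 := g xhat.
have e2 : 0 < e / 2 by rewrite divr_gt0.
have e3 : 0 < e / (2 * (r + 1)) by rewrite divr_gt0 // mulr_gt0 //; lra.
have /cvgrPdist_le H1 := Hg v.
have H1a := H1 1 ltr01; have H1b := H1 _ e3.
have H2 := HC u0 _ e2.
have dpos : 0 < d / (`|u0| + 2) by rewrite divr_gt0 //; have := normr_ge0 u0; lra.
have H3 := nbhs_right_lt dpos.
have H4 := @nbhs_right_gt R 0.
near=> t => phi Cphi.
have t0 : 0 < t by near: t; exact: H4.
have tlt : t < d / (`|u0| + 2) by near: t; exact: H3.
have h3 : forall i : Y -> R^o, C i ->
   `|(i (g xhat + t *: u0) - i (g xhat) - t * Dphi i u0) / t| <= e / 2 by near: t; exact: H2.
have h1 : `|0 - `|t^-1 *: (g (xhat + t *: v) - g xhat - t *: Dg v)| | <= 1 by near: t; exact: H1a.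
have h2 : `|0 - `|t^-1 *: (g (xhat + t *: v) - g xhat - t *: Dg v)| | <= e / (2 * (r + 1)) by near: t; exact: H1b.
move: h1 h2; rewrite sub0r normrN normr_id normrZ gtr0_norm ?invr_gt0 //.
set X := g (xhat + t *: v) - g xhat - t *: Dg v.
rewrite mulrC !ler_pdivrMr // => h1 h2.
set A := g (xhat + t *: v); set B := y0 + t *: u0.
have AB : A - B = X by rewrite /X /B opprD addrA.
have nu0 := normr_ge0 u0.
have tlt' : t * (`|u0| + 2) < d by rewrite -ltr_pdivlMr //; lra.
have hB : ball (g xhat) d B.
  rewrite -ball_normE /ball_ /= /B /y0 opprD addrA subrr sub0r normrN normrZ gtr0_norm //.
  nra.
have hA : ball (g xhat) d A.
  rewrite -ball_normE /ball_ /=.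
  have -> : g xhat - A = - (A - B) - t *: u0 by rewrite opprB /B /y0 addrAC addrK.
  rewrite AB (le_lt_trans (ler_normB _ _)) // normrN normrZ gtr0_norm //; nra.
have L := Lip phi Cphi A B hA hB; rewrite AB in L.
have h3' := h3 phi Cphi; rewrite /= in h3'.
have -> : phi A - phi y0 - t * Dphi phi u0 = (phi A - phi B) + (phi B - phi y0 - t * Dphi phi u0) by rewrite !addrA addrNK.
rewrite mulrDl (le_trans (ler_normD _ _)) // [e in _ <= e](splitr e) lerD //.
rewrite normrM normfV (gtr0_norm t0) ler_pdivrMr //.
set q := e / (2 * (r + 1)) in h2 e3.
have hq : q * (2 * (r + 1)) = e by rewrite /q divfK //; lra.
have nX := normr_ge0 X.
have : r * `|X| <= r * (q * t) by rewrite ler_wpM2l.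
nra.
Unshelve. all: by end_near. Qed.

Lemma deriv_bound (R : realType) (Y : normedModType R)
  (C : set (Y -> R^o)) (Dphi : (Y -> R^o) -> (Y -> R^o)) (r : R) (y0 : Y) :
  equi_lipschitz C r y0 ->
  equi_gateaux C id y0 Dphi ->
  forall phi, C phi -> forall y, `|Dphi phi y| <= r * `|y|.
Proof.
move=> [d d0 Lip] [_ HC] phi Cphi y.
apply/ler_addgt0Pr => e e0.
have ny := normr_ge0 y.
have dpos : 0 < d / (`|y| + 1) by rewrite divr_gt0 //; lra.
suff H : \forall t \near (0:R)^'+, `|Dphi phi y| <= r * `|y| + e.
  by have [t Pt] := @filter_ex R (0:R)^'+ _ _ H.
near=> t.
have t0 : 0 < t by near: t; exact: nbhs_right_gt.
have tlt : t < d / (`|y| + 1) by near: t; exact: nbhs_right_lt.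
have h : `|(phi (y0 + t *: y) - phi y0 - t * Dphi phi y) / t| <= e.
  by near: t; apply: filterS (HC y e e0) => s /(_ phi Cphi).
have tlt' : t * (`|y| + 1) < d by rewrite -ltr_pdivlMr //; lra.
have hB : ball y0 d y0 by exact: ballxx.
have hA : ball y0 d (y0 + t *: y).
  rewrite -ball_normE /ball_ /= opprD addrA subrr sub0r normrN normrZ gtr0_norm //; nra.
have L := Lip phi Cphi _ _ hA hB.
rewrite addrAC subrr add0r normrZ gtr0_norm // in L.
move: h; rewrite normrM normfV (gtr0_norm t0) ler_pdivrMr // => h.
have : `|t * Dphi phi y| <= `|phi (y0 + t *: y) - phi y0| + `|phi (y0 + t *: y) - phi y0 - t * Dphi phi y|.
  set a := phi (y0 + t *: y) - phi y0.
  have e1 : a - (a - t * Dphi phi y) = t * Dphi phi y by rewrite opprB addrC addrNK.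
  by rewrite -{1}e1 ler_normB.
rewrite normrM (gtr0_norm t0) => H.
have : t * `|Dphi phi y| <= t * (r * `|y| + e) by nra.
by rewrite ler_pM2l.
Unshelve. all: by end_near. Qed.

Section K.
Variables (R : realType) (Y : normedModType R) (r : R).

Definition Klin : set {ptws Y -> R^o} :=
  \bigcap_(p in [set: R * Y * Y])
    [set f : {ptws Y -> R^o} | f (p.1.1 *: p.1.2 + p.2) = p.1.1 * f p.1.2 + f p.2].
Definition Kb : set {ptws Y -> R^o} :=
  \bigcap_(y in [set: Y]) [set f : {ptws Y -> R^o} | `|f y| <= r * `|y|].
Definition K := Klin `&` Kb.

Lemma proj_cont (y : Y) : continuous (fun f : {ptws Y -> R^o} => f y).
Proof. exact: (@proj_continuous Y (fun _ : Y => R^o) y). Qed.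

Lemma closed_K : closed K.
Proof.
apply: closedI; apply: closed_bigI.
  move=> [[a u] v] _ /=.
  pose phi := fun f : {ptws Y -> R^o} => f (a *: u + v) - (a * f u + f v).
  have -> : [set f : {ptws Y -> R^o} | f (a *: u + v) = a * f u + f v] = phi @^-1` [set x | x = 0].
    apply/seteqP; split => f /=; rewrite /phi; first by move=> ->; rewrite subrr.
    by move/eqP; rewrite subr_eq0 => /eqP.
  apply: preimage_closed; last exact: closed_eq.
  move=> f _; rewrite /phi.
  have h1 : (fun g : {ptws Y -> R^o} => g (a *: u + v)) @ f --> (f (a *: u + v) : R^o) := proj_cont _ f.
  have h2 : (fun g : {ptws Y -> R^o} => g u) @ f --> (f u : R^o) := proj_cont _ f.
  have h3 : (fun g : {ptws Y -> R^o} => g v) @ f --> (f v : R^o) := proj_cont _ f.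
  have h4 : (fun g : {ptws Y -> R^o} => a * g u) @ f --> (a * f u : R^o).
    Timeout 30 exact: (@cvgMl_tmp R _ (nbhs f) (nbhs_filter f) _ a _ h2).
  have H5 := @cvgD R R^o _ (nbhs f) (nbhs_filter f) _ _ _ _ h4 h3.
  have H6 := @cvgB R R^o _ (nbhs f) (nbhs_filter f) _ _ _ _ h1 H5.
  Timeout 30 exact: H6.
move=> u _ /=.
have -> : [set f : {ptws Y -> R^o} | `|f u| <= r * `|u|] =
   (fun f : {ptws Y -> R^o} => `|f u|) @^-1` [set x | x <= r * `|u|] by [].
apply: preimage_closed; last exact: closed_le.
move=> f _; apply: continuous_comp; first exact: proj_cont.
exact: norm_continuous.
Qed.


Lemma compact_K : compact K.
Proof.
pose A := fun y : Y => `[- (r * `|y|), r * `|y|]%classic : set R^o.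
have := @tychonoff Y (fun _ : Y => R^o) A (fun y => @segment_compact R _ _).
move=> Hc.
apply: (subclosed_compact closed_K Hc).
move=> f [_ Kbf] y; have := Kbf y I; rewrite /A /= in_itv /= => H.
by rewrite -ler_norml.
Qed.

Lemma K_linear f : K f -> forall a u v, f (a *: u + v) = a * f u + f v.
Proof. by move=> [Kl _] a u v; exact: (Kl (a, u, v) I). Qed.

Lemma K_topdual f : 0 <= r -> K f -> topdual Y f.
Proof.
move=> r0 Kf; have [_ Kb'] := Kf.
have fl := K_linear _ Kf.
split; first by move=> a u v; exact: fl.
move=> x; apply/cvgrPdist_le => e e0.
have r1 : 0 < r + 1 by lra.
have ep : 0 < e / (r + 1) by rewrite divr_gt0.
have Hn := @near_ball _ _ x _ ep.
near=> z.
have hz : `|x - z| <= e / (r + 1).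
  apply/ltW; have : ball x (e / (r + 1)) z by near: z; exact: Hn.
  by rewrite -ball_normE /ball_ /=.
have -> : f x - f z = f (x - z).
  rewrite (_ : x - z = (-1) *: z + x); last by rewrite scaleN1r addrC.
  by rewrite fl mulN1r addrC.
apply: (le_trans (Kb' _ I)).
have hq : e / (r + 1) * (r + 1) = e by rewrite divfK //; lra.
have := normr_ge0 (x - z).
have : r * `|x - z| <= r * (e / (r + 1)) by rewrite ler_wpM2l.
nra.
Unshelve. all: by end_near. Qed.
End K.

Arguments comp_uniform {R E Y g xhat Dg C Dphi r}.
Arguments deriv_bound {R Y C Dphi r y0}.
Arguments K_linear {R Y r f}.
Arguments K_topdual {R Y r f}.
Arguments closed_K {R Y r}.
Arguments K {R Y} r.
Arguments compact_K {R Y} r.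

Theorem lemma4p7 (R : realType) (E : tvsType R) (Y : normedModType R)
  (Omega : set E) (g : E -> Y) (xhat : E) (Dg : E -> Y)
  (C : set (Y -> R^o)) (Dphi : (Y -> R^o) -> (Y -> R^o)) (r : R) :
  hausdorff_space E ->
  open Omega -> Omega xhat ->
  is_gateaux_deriv g xhat Dg ->
  {for xhat, continuous g} ->
  0 <= r ->
  equi_lipschitz C r (g xhat) ->
  equi_gateaux C id (g xhat) Dphi ->
  compact (wstar_clconv [set (Dphi phi : {ptws Y -> R^o}) | phi in C])
  /\ equi_gateaux C (fun phi => phi \o g) xhat (fun phi => Dphi phi \o Dg).
Proof.
move=> _ _ _ Hg _ r0 HL HCg.
have CU := comp_uniform Hg r0 HL HCg.
split.
  set S := [set (Dphi phi : {ptws Y -> R^o}) | phi in C].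
  set W := wstar_clconv S.
  have SK : S `<=` K r.
    move=> f [phi Cphi <-]; split.
      move=> [[a u] v] _ /=; have [[lin _] _] := HCg.1 phi Cphi; exact: lin.
    move=> y _ /=. exact: deriv_bound HL HCg _ Cphi y.
  have Kfam : S `<=` K r /\ convex_fun_set (K r) /\ wstar_closed (K r).
    split => //; split.
      move=> f h Kf Kh s /andP[s0 s1]; split.
        move=> [[a u] v] _ /=; rewrite !(K_linear Kf) !(K_linear Kh).
        by rewrite !mulrDr !mulrA [s * a]mulrC [(1 - s) * a]mulrC !addrA; congr (_ + _); rewrite -!addrA; congr (_ + _); rewrite addrC.
      move=> y _ /=; have [_ Kbf] := Kf; have [_ Kbh] := Kh.
      have hf : `|f y| <= r * `|y| := Kbf y I; have hh : `|h y| <= r * `|y| := Kbh y I.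
      apply: (le_trans (ler_normD _ _)); rewrite !normrM (ger0_norm s0) (ger0_norm (_ : 0 <= 1 - s)); last by lra.
      have s2 : 0 <= 1 - s by lra.
      have := ler_wpM2l s0 hf; have := ler_wpM2l s2 hh; nra.
    split; first by move=> f; exact: K_topdual r0.
    by move=> f [_ cf]; exact: closed_K cf.
  have WK : W `<=` K r.
    move=> f; rewrite /W /wstar_clconv; apply: bigcap_inf; exact: Kfam.
  have Wcl : closed W.
    move=> f cWf; have fK : K r f := closed_K _ (closureS WK cWf).
    move=> A [SA [cA [Atop Acl]]]; have Acl2 := Acl; apply: Acl2; split; first exact: K_topdual r0 fK.
    apply: closureS cWf => h; rewrite /W /wstar_clconv; apply: bigcap_inf; exact: (conj SA (conj cA (conj Atop Acl))).
  exact: subclosed_compact Wcl (compact_K r) WK.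
split; last first.
  move=> v e e0; exact: CU.
move=> phi Cphi; have [[lin cont] _] := HCg.1 phi Cphi; have [[ling contg] Hgv] := Hg.
split.
  split.
    by move=> a u v /=; rewrite ling; exact: lin.
  by move=> x; apply: continuous_comp; [exact: contg | exact: cont].
move=> v; apply/cvgrPdist_le => e e0.
near=> t.
have : `| (phi (g (xhat + t *: v)) - phi (g xhat) - t * Dphi phi (Dg v)) / t | <= e.
  by near: t; apply: filterS (CU v e e0) => s /(_ phi Cphi).
by rewrite sub0r normrN normr_id /= mulrC.
Unshelve. all: by end_near. Qed.
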